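(* Assume (H$_G$). Let $\alpha\in U$ and $\xi>0$, and set $\gamma=\alpha^{\nu-1}/\xi$. For each integer $d\ge\nu-1$ define the partial sum $$\mathcal G^{(d)}:=\alpha\sum_{j=0}^{\lfloor\frac{d-\nu+1}{2\nu}\rfloor}\ \sum_{i=\nu-1}^{d-2j\nu}\frac{a_{i,j,\nu}(\gamma)}{n^{2j+i/\nu}}.$$ Then for every $d\ge\nu-1$ there is a constant $K_{3,d}(\alpha,\gamma)$ such that, for all sufficiently large $n$, $$\Big|x_{n,\frac n\alpha,\frac{n^{\nu-1}}{\xi}}-\mathcal G^{(d)}\Big|<\frac{K_{3,d}(\alpha,\gamma)}{n^{(d+1)/\nu}}.$$
   Context: Fix an integer $\nu\ge2$. For $N,r>0$ let $w_{N,r}(\lambda)=\exp[-N(\lambda^2/2+r\lambda^{2\nu}/(2\nu))]$, and let $x_{n,N,r}=b_n^2$ be the recurrence coefficients of the monic orthogonal polynomials: $\lambda\pi_n=\pi_{n+1}+b_n^2\pi_{n-1}$. Let $c_\nu=\binom{2\nu-1}{\nu-1}$. For $y\ge0$ let $Z_0(y)$ be the unique root in $(0,1]$ of $1=Z+c_\nu yZ^\nu$. For $g\ge1$ set $$Z_g(y)=\frac{Z_0(y)(Z_0(y)-1)P_{3g-2,\nu}(Z_0(y))}{(\nu-(\nu-1)Z_0(y))^{5g-1}},$$ where the $P_{3g-2,\nu}$ are fixed real polynomials of degree $3g-2$. For fixed $\gamma>0$, $Z_g(\gamma n^{\nu-1})$ has a convergent expansion for large $n$ of the form $$Z_g(\gamma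 n^{\nu-1})=\sum_{i\ge\nu-1}a_{i,g,\nu}(\gamma)\,n^{-i/\nu};$$ this defines the coefficients $a_{i,g,\nu}(\gamma)$. Hypothesis (H$_G$): there is a neighborhood $U$ of $1$ such that for each $\alpha\in U$ and each integer $m\ge0$ there exist $K_{1,m}(\alpha)$ and $n_0$ such that, for all $n\ge n_0$ and all $r>0$, $$\Big|x_{n,n/\alpha,r}-\alpha\sum_{g=0}^m\frac{Z_g(\alpha^{\nu-1}r)}{n^{2g}}\Big|<\frac{K_{1,m}(\alpha)}{n^{2m+2}}.$$ *)

(* Defs.v *)
From HB Require Import structures.
From mathcomp Require Import all_boot all_order all_algebra.
From mathcomp Require Import all_classical all_reals all_analysis.
Set Implicit Arguments. Unset Strict Implicit. Unset Printing Implicit Defensive.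
Import Order.TTheory GRing.Theory Num.Theory.
Local Open Scope ring_scope.
Local Open Scope classical_set_scope.

Section Defs.
Variable R : realType.

Definition wgt (nu : nat) (N r : R) (l : R) : R :=
  expR (- N * (l ^+ 2 / 2 + r * l ^+ (2 * nu) / (2 * nu)%:R)).

Definition ipf (nu : nat) (N r : R) (p q : {poly R}) : R -> R :=
  fun l => p.[l] * q.[l] * wgt nu N r l.

Definition ip (nu : nat) (N r : R) (p q : {poly R}) : R :=
  Rintegral lebesgue_measure setT (ipf nu N r p q).

Definition monic_OP (nu : nat) (N r : R) (pi : nat -> {poly R}) : Prop :=
  forall n, [/\ pi n \is monic, size (pi n) = n.+1 &
    forall m, (m < n)%N ->
      lebesgue_measure.-integrable setT (EFin \o ipf nu N r (pi m) (pi n)) /\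
      ip nu N r (pi m) (pi n) = 0].

Definition cnu (nu : nat) : R := ('C((2 * nu).-1, nu.-1))%:R.

Definition Z0 (nu : nat) (y : R) : R :=
  xget 0 [set z : R | 0 < z <= 1 /\ 1 = z + cnu nu * y * z ^+ nu].

(* Z_g(y), with P g playing the role of P_{3g-2,nu} *)
Definition Zg (nu : nat) (P : nat -> {poly R}) (g : nat) (y : R) : R :=
  if g == 0%N then Z0 nu y
  else Z0 nu y * (Z0 nu y - 1) * (P g).[Z0 nu y] /
       (nu%:R - (nu.-1)%:R * Z0 nu y) ^+ (5 * g).-1.

Definition Gd (nu : nat) (alpha : R) (a : nat -> nat -> R) (d n : nat) : R :=
  alpha * \sum_(0 <= j < ((d - nu.-1) %/ (2 * nu)).+1)
            \sum_(nu.-1 <= i < (d - 2 * j * nu).+1)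
               a i j / (n%:R `^ ((2 * j)%:R + i%:R / nu%:R)).

End Defs.

(* Main.v *)
Require Import Defs.
From HB Require Import structures.
From mathcomp Require Import all_boot all_order all_algebra.
From mathcomp Require Import all_classical all_reals all_analysis.
From mathcomp Require Import ring lra zify.
Import Order.TTheory GRing.Theory Num.Theory.
Import numFieldNormedType.Exports.
Local Open Scope ring_scope.
Local Open Scope classical_set_scope.



Lemma geo_sum (R : realType) (q : R) (hq0 : 0 <= q) (hq : q <= 1/2) (k p : nat) :
  \sum_(k <= i < k + p) q ^+ i <= 2 * q ^+ k - 2 * q ^+ (k + p).
Proof.
elim: p => [|p IH]; first by rewrite addn0 big_geq // subrr.
rewrite addnS big_nat_recr /=; last by rewrite leq_addr.
have h1 : q ^+ (k + p).+1 = q * q ^+ (k + p) by rewrite exprS.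
have h2 : 0 <= q ^+ (k + p) by rewrite exprn_ge0.
rewrite h1. nra.
Qed.

Lemma tail_bound (R : realType) (c : nat -> R) (t0 M : R) (ht0 : 0 < t0)
  (hM : forall i, `|c i * t0 ^+ i| <= M) (t : R) (ht0' : 0 <= t) (ht : t <= t0 / 2)
  (l : R) (hl : series (fun i => c i * t ^+ i) @ \oo --> l) (k : nat) :
  `|l - \sum_(i < k) c i * t ^+ i| <= 2 * M / t0 ^+ k * t ^+ k.
Proof.
have M0 : 0 <= M by apply: le_trans (hM 0%N).
set q := t / t0.
have hq0 : 0 <= q by rewrite /q divr_ge0 // ltW.
have hq : q <= 1/2 by rewrite /q ler_pdivrMr // mul1r mulrC.
have key : forall p, `|\sum_(k <= i < k + p) c i * t ^+ i| <= 2 * M * q ^+ k.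
  move=> p.
  apply: le_trans (ler_norm_sum _ _ _) _.
  apply: (@le_trans _ _ (\sum_(k <= i < k + p) M * q ^+ i)).
    apply: ler_sum => i _.
    have -> : c i * t ^+ i = (c i * t0 ^+ i) * q ^+ i.
      rewrite /q exprMn exprVn -mulrA; congr (_ * _).
      rewrite mulrA mulrC mulrA mulVf ?mul1r //.
      by rewrite expf_neq0 // gt_eqF.
    by rewrite normrM (ger0_norm (exprn_ge0 _ hq0)) ler_wpM2r // exprn_ge0.
  rewrite -mulr_sumr.
  have := @geo_sum _ q hq0 hq k p.
  have : 0 <= q ^+ (k + p) by rewrite exprn_ge0.
  move=> h1 h2.
  have := ler_wpM2l M0 h2. nra.
have -> : 2 * M / t0 ^+ k * t ^+ k = 2 * M * q ^+ k.
  by rewrite /q exprMn exprVn mulrA -[_ / _ * _]mulrA [_^-1 * _]mulrC mulrA.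
set S := \sum_(i < k) c i * t ^+ i.
have h1 : (fun N => `|series (fun i => c i * t ^+ i) N - S|) @ \oo --> `|l - S|.
  apply: cvg_norm. apply: cvgB => //. exact: cvg_cst.
apply: (ler_cvg_to h1 (cvg_cst (2 * M * q ^+ k))).
- exists k => // N /= hN.
  rewrite /series /= (big_cat_nat (leq0n k) hN) /= -/S.
  have -> : \sum_(0 <= i < k) c i * t ^+ i = S by rewrite big_mkord.
  rewrite addrC addrK.
  have -> : N = (k + (N - k))%N by rewrite subnKC.
  exact: key.
Qed.



Definition TT {R : realType} (nu : nat) (y : R) : R := (y `^ (nu%:R^-1))^-1.

Lemma powR_nat (R : realType) (y r : R) i : 0 <= y -> (y `^ r) ^+ i = y `^ (r * i%:R).
Proof. by move=> hy; rewrite powRrM powR_mulrn // powR_ge0. Qed.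

Lemma tt_pow (R : realType) (nu : nat) (y : R) i : 0 <= y -> y `^ (-(i%:R / nu%:R)) = TT nu y ^+ i.
Proof.
move=> hy; rewrite /TT exprVn powR_nat // powRN.
by congr (_ ^-1); congr (_ `^ _); rewrite mulrC.
Qed.

Lemma tt_nu (R : realType) (nu : nat) (y : R) : (0 < nu)%N -> 0 < y -> TT nu y ^+ nu = y^-1.
Proof.
move=> hnu hy; rewrite /TT exprVn powR_nat ?ltW // mulVf ?powRr1 ?ltW //.
by rewrite pnatr_eq0 -lt0n.
Qed.

Lemma tt_gt0 (R : realType) (nu : nat) (y : R) : 0 < y -> 0 < TT nu y.
Proof. by move=> hy; rewrite /TT invr_gt0 powR_gt0. Qed.

Lemma term_eq (R : realType) (nu : nat) (y : R) (hy : 0 < y) g i c :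
  c / y `^ ((2*g)%:R + i%:R/nu%:R) = c * TT nu y ^+ i / y ^+ (2*g).
Proof.
rewrite powRD ?(gt_eqF hy) ?implybT // powR_mulrn ?ltW // -tt_pow ?ltW // powRN.
by rewrite invfM mulrA mulrAC.
Qed.

Lemma conv_series (R : realType) (nu : nat) (y : R) (hy : 0 <= y) (c : nat -> R) (l : R) :
  ([series c i * (y `^ (- (i%:R / nu%:R)))]_i : R^nat) @ \oo --> l ->
  series (fun i => c i * TT nu y ^+ i) @ \oo --> l.
Proof.
have -> : (fun i => c i * TT nu y ^+ i) = (fun i => c i * (y `^ (- (i%:R / nu%:R)))).
  by apply: funext => i; rewrite tt_pow.
done.
Qed.



Lemma inner_eq (R : realType) (nu : nat) (c : nat -> R) (f : nat -> R) k
  (hc : forall i, (i < nu.-1)%N -> c i = 0) :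
  \sum_(nu.-1 <= i < k) c i * f i = \sum_(i < k) c i * f i.
Proof.
rewrite -(big_mkord xpredT (fun i => c i * f i)).
case: (leqP nu.-1 k) => h.
  rewrite (big_cat_nat (leq0n _) h) /=.
  have -> : \sum_(0 <= i < nu.-1) c i * f i = 0.
    rewrite big_nat_cond big1 // => i /andP[/andP[_ hi] _]; by rewrite hc ?mul0r.
  by rewrite add0r.
rewrite [LHS]big_geq ?(ltnW h) // big_nat_cond big1 //.
by move=> i /andP[/andP[_ hi] _]; rewrite hc ?mul0r // (leq_trans hi) // ltnW.
Qed.

Lemma Gd_eq (R : realType) (nu : nat) (hnu : (2 <= nu)%N) (alpha : R) (a : nat -> nat -> R)
  (ha0 : forall i g : nat, (i < nu.-1)%N -> a i g = 0) d (hd : (nu.-1 <= d)%N) (n : nat)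
  (hn : (0 < n)%N) :
  Gd nu alpha a d n = alpha * \sum_(0 <= g < d.+1)
     (\sum_(i < (d - 2 * g * nu).+1) a i g * @TT R nu n%:R ^+ i) / n%:R ^+ (2 * g).
Proof.
rewrite /Gd; congr (alpha * _).
set J := ((d - nu.-1) %/ (2 * nu))%N.
have hJ : (J.+1 <= d.+1)%N.
  by rewrite ltnS (leq_trans (leq_div _ _)) // leq_subr.
rewrite (big_cat_nat (leq0n _) hJ) /=.
have -> : \sum_(J.+1 <= g < d.+1)
     (\sum_(i < (d - 2 * g * nu).+1) a i g * @TT R nu n%:R ^+ i) / n%:R ^+ (2 * g) = 0.
  rewrite big_nat_cond big1 // => g /andP[/andP[hg1 hg2] _].
  rewrite big1 ?mul0r // => i _.
  have hi := ltn_ord i.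
  rewrite ha0 ?mul0r //. apply: (leq_trans hi).
  have h1 := @ltn_ceil (d - nu.-1) (2 * nu) ltac:(lia).
  have h2 : (J.+1 * (2 * nu) <= 2 * g * nu)%N.
    have h3 := leq_mul hg1 (leqnn (2 * nu)).
    by apply: (leq_trans h3); rewrite mulnA (mulnC g 2).
  move: h1 h2; rewrite -/J.
  set P1 := (J.+1 * (2 * nu))%N; set P2 := (2 * g * nu)%N.
  move=> h1 h2. lia.
rewrite addr0.
apply: eq_big_nat => g hg.
rewrite mulr_suml inner_eq //.
- apply: eq_bigr => i _; rewrite term_eq // ltr0n //.
- by move=> i hi; rewrite ha0.
Qed.


Lemma per_g (R : realType) nu (hnu : (2 <= nu)%N) (c : nat -> R) (Z : nat -> R)
  (hc : exists N0, forall n, (N0 <= n)%N ->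
     ([series c i * (n%:R `^ (- (i%:R / nu%:R)))]_i : R^nat) @ \oo --> Z n) k :
  exists C N, forall n, (N <= n)%N ->
   `|Z n - \sum_(i < k) c i * @TT R nu n%:R ^+ i| <= C * @TT R nu n%:R ^+ k.
Proof.
move: hc => [N0 HN0].
set ng := maxn N0 1.
have hng : (0 < ng)%N by rewrite leq_max orbT.
have hcv := @conv_series R nu _ (ler0n _ ng) _ _ (HN0 ng (leq_maxl _ _)).
set t0 := @TT R nu ng%:R.
have t0p : 0 < t0 by apply: tt_gt0; rewrite ltr0n.
have [M hM] : exists M, forall i, `|c i * t0 ^+ i| <= M.
  have h0 := cvg_series_cvg_0 (cvgP _ hcv).
  have hb := cvg_seq_bounded (cvgP _ h0).
  move: hb; rewrite /bounded_near. move=> [M0 [_ HM]].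
  exists (M0 + 1) => i. apply: (HM (M0 + 1)) => //. by rewrite ltrDl.
exists (2 * M / t0 ^+ k), (maxn N0 (ng * 2 ^ nu)).
move=> n hn.
have hn0 : (N0 <= n)%N by move: hn; rewrite geq_max => /andP[].
have hn1 : (ng * 2 ^ nu <= n)%N by move: hn; rewrite geq_max => /andP[].
have hnp : (0 < n)%N.
  apply: leq_trans hn1; rewrite muln_gt0 hng expn_gt0 //.
have hl := @conv_series R nu _ (ler0n _ n) _ _ (HN0 n hn0).
apply: (@tail_bound R c t0 M t0p hM _ _ _ _ hl).
  by apply: ltW; apply: tt_gt0; rewrite ltr0n.
have h1 : 0 <= @TT R nu n%:R by apply: ltW; apply: tt_gt0; rewrite ltr0n.
have h2 : 0 <= t0 / 2 by rewrite divr_ge0 // ltW.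
rewrite -(@ler_pXn2r _ nu) ?nnegrE //; last lia.
rewrite exprMn tt_nu ?ltr0n //; last lia.
rewrite /t0 tt_nu ?ltr0n //; last lia.
rewrite exprVn -invfM lef_pV2 ?posrE ?mulr_gt0 ?exprn_gt0 ?ltr0n //.
by rewrite -natrX -natrM ler_nat.
Qed.


Theorem lemmaA4 (R : realType) (nu : nat) (hnu : (2 <= nu)%N)
  (P : nat -> {poly R})
  (hP : forall g : nat, (1 <= g)%N -> size (P g) = (3 * g - 2).+1)
  (pi : R -> R -> nat -> {poly R})
  (hpi : forall N r : R, 0 < N -> 0 < r -> monic_OP nu N r (pi N r))
  (x : nat -> R -> R -> R)
  (hx : forall N r : R, 0 < N -> 0 < r -> forall n : nat, (1 <= n)%N ->
          'X * pi N r n = pi N r n.+1 + x n N r *: pi N r n.-1)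
  (U : set R) (hU : nbhs (1 : R) U)
  (HG : forall alpha, U alpha -> forall m : nat,
     exists K : R, exists n0 : nat, forall n : nat, (n0 <= n)%N ->
       forall r : R, 0 < r ->
         `| x n (n%:R / alpha) r
            - alpha * \sum_(0 <= g < m.+1)
                 Zg nu P g (alpha ^+ nu.-1 * r) / n%:R ^+ (2 * g) |
         < K / n%:R ^+ (2 * m + 2))
  (alpha xi : R) (halpha : U alpha) (hxi : 0 < xi)
  (a : nat -> nat -> R)
  (ha0 : forall i g : nat, (i < nu.-1)%N -> a i g = 0)
  (ha : forall g : nat, \forall n \near \oo,
     ([series a i g * (n%:R `^ (- (i%:R / nu%:R)))]_i : R^nat) @ \oo -->
       Zg nu P g ((alpha ^+ nu.-1 / xi) * n%:R ^+ nu.-1))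
  (d : nat) (hd : (nu.-1 <= d)%N) :
  exists K : R, \forall n \near \oo,
    `| x n (n%:R / alpha) (n%:R ^+ nu.-1 / xi) - Gd nu alpha a d n |
      < K / (n%:R `^ (d.+1%:R / nu%:R)).
Proof.
set gam := alpha ^+ nu.-1 / xi.
pose kk g := (d - 2 * g * nu).+1.
have hper : forall g, exists p : R * nat, forall n, (p.2 <= n)%N ->
   `|Zg nu P g (gam * n%:R ^+ nu.-1) - \sum_(i < kk g) a i g * @TT R nu n%:R ^+ i|
     <= p.1 * @TT R nu n%:R ^+ kk g.
  move=> g.
  have [C [N HCN]] := @per_g R nu hnu (fun i => a i g)
     (fun n => Zg nu P g (gam * n%:R ^+ nu.-1)) ltac:(have [N0 _ HN0] := ha g;
        by exists N0 => n hn; apply: HN0) (kk g).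
  by exists (C, N).
have [f hf] := choice hper.
have [K0 [n0 H0]] := HG alpha halpha d.
set Nst := maxn (maxn n0 1) (\max_(g < d.+1) (f g).2).
exists (`|K0| + `|alpha| * \sum_(0 <= g < d.+1) `|(f g).1|).
exists Nst => //.
move=> n /= hn.
have hn0 : (n0 <= n)%N by move: hn; rewrite /Nst !geq_max => /andP[/andP[]].
have hnp : (0 < n)%N by move: hn; rewrite /Nst !geq_max => /andP[/andP[]].
have hfn : forall g, (g < d.+1)%N -> ((f g).2 <= n)%N.
  move=> g hg; apply: leq_trans hn; rewrite leq_max; apply/orP; right.
  exact: (@leq_bigmax _ (fun g : 'I_d.+1 => (f g).2) (Ordinal hg)).
set t := @TT R nu n%:R.
have ht0 : 0 < t by apply: tt_gt0; rewrite ltr0n.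
have htnu : t ^+ nu = n%:R^-1 by apply: tt_nu; [lia | rewrite ltr0n].
have ht1 : t <= 1.
  rewrite -(@ler_pXn2r _ nu) ?nnegrE ?ler01 ?(ltW ht0) //; last lia.
  by rewrite htnu expr1n invf_le1 ?ltr0n // ler1n.
have hinv : forall m, (n%:R ^+ m)^-1 = t ^+ (nu * m) :> R.
  by move=> m; rewrite exprM htnu exprVn.
have hKt : (n%:R `^ (d.+1%:R / nu%:R))^-1 = t ^+ d.+1.
  by rewrite -powRN tt_pow.
rewrite (@Gd_eq R nu hnu alpha a ha0 d hd n hnp) -/t.
have hX := H0 n hn0 (n%:R ^+ nu.-1 / xi) ltac:(by rewrite divr_gt0 // exprn_gt0 // ltr0n).
have e : alpha ^+ nu.-1 * (n%:R ^+ nu.-1 / xi) = gam * n%:R ^+ nu.-1.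
  by rewrite /gam [RHS]mulrAC -mulrA.
rewrite e in hX.
set Zs := \sum_(0 <= g < d.+1) Zg nu P g (gam * n%:R ^+ nu.-1) / n%:R ^+ (2 * g) in hX.
set Ss := \sum_(0 <= g < d.+1) (\sum_(i < (d - 2 * g * nu).+1) a i g * t ^+ i) / n%:R ^+ (2 * g).
set X := x n (n%:R / alpha) (n%:R ^+ nu.-1 / xi) in hX *.
have e3 : `|X - alpha * Zs| < `|K0| * t ^+ d.+1.
  apply: (lt_le_trans hX).
  rewrite hinv.
  apply: (le_trans (ler_wpM2r (exprn_ge0 _ (ltW ht0)) (ler_norm K0))).
  apply: ler_wpM2l => //.
  apply: ler_wiXn2l => //; first exact: ltW.
  lia.
have e2 : `|Zs - Ss| <= \sum_(0 <= g < d.+1) `|(f g).1| * t ^+ d.+1.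
  rewrite /Zs /Ss -sumrB.
  apply: le_trans (ler_norm_sum _ _ _) _.
  apply: ler_sum_nat => g /andP[_ hg].
  rewrite -mulrBl normrM hinv (ger0_norm (exprn_ge0 _ (ltW ht0))).
  have := hf g n (hfn g hg); rewrite -/t /kk => hb.
  apply: le_trans (ler_wpM2r (exprn_ge0 _ (ltW ht0)) hb) _.
  rewrite -mulrA -exprD.
  apply: le_trans (ler_wpM2r (exprn_ge0 _ (ltW ht0)) (ler_norm _)) _.
  apply: ler_wpM2l => //.
  apply: ler_wiXn2l => //; first exact: ltW.
  lia.
have -> : X - alpha * Ss = (X - alpha * Zs) + alpha * (Zs - Ss) by ring.
rewrite hKt mulrDl -mulrA mulr_suml.
apply: (le_lt_trans (ler_normD _ _)).
rewrite normrM.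
have := ler_wpM2l (normr_ge0 alpha) e2.
lra.
Qed.
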